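(* Let $N\ge 1$, let $a_1,\dots,a_N>0$, $T_1,\dots,T_N\ge 0$ and $P_{\mathrm{tot}}>0$. For $P_i\ge 0$ let $r_i(P_i)=\log_2(1+a_iP_i)$, $J(\mathbf P)=\sum_{i=1}^N (r_i(P_i)-T_i)^2$, and $\bar P_i=(2^{T_i}-1)/a_i$. Consider the problem (P): minimize $J(\mathbf P)$ subject to $\sum_i P_i\le P_{\mathrm{tot}}$ and $P_i\ge 0$ for all $i$; let $J^*$ denote its optimal value. Let $c=\ln 2$. Say that $\lambda\ge 0$ is a KKT multiplier for the sum-power constraint at a feasible $\mathbf P$ if there exist $\mu_1,\dots,\mu_N\ge 0$ with $2(r_i(P_i)-T_i)\frac{a_i}{(1+a_iP_i)c}+\lambda-\mu_i=0$ and $\mu_iP_i=0$ for all $i$, and $\lambda(\sum_i P_i-P_{\mathrm{tot}})=0$. Then: (A) If $P_{\mathrm{tot}}\ge \sum_{i=1}^N \bar P_i$, then the optimal solution is $P_i^*=\bar P_i$ for all $i$, $J^*=0$, and $\sum_i P_i^*=\sum_i\bar P_i\le P_{\mathrm{tot}}$ (with strict inequality, i.e. the power constraint slack, whenever $P_{\mathrm{tot}}>\sum_i\bar P_i$). (B) If $P_{\mathrm{tot}}<\sum_{i=1}^N\bar P_i$, then every optimal solution $\mathbf P^*$ satisfies $\sum_i P_i^*=P_{\mathrm{tot}}$, $J^*>0$, and every KKT multiplier $\lambda^*$ for the sum-power constraint at $\mathbf P^*$ satisfies $\lambda^*>0$.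
   Context: The problem restricted to the domain $0\le P_i\le \bar P_i$ is a convex program with linear constraints satisfying Slater's condition, so the KKT conditions above characterize optimal solutions. *)

(* Defs.v *)
From HB Require Import structures.
From mathcomp Require Import all_boot all_order all_algebra.
From mathcomp Require Import all_classical all_reals all_analysis.
Set Implicit Arguments. Unset Strict Implicit. Unset Printing Implicit Defensive.
Import Order.TTheory GRing.Theory Num.Theory.
Local Open Scope ring_scope.
Local Open Scope classical_set_scope.

Section Defs.
Variables (R : realType) (N : nat).

Definition rate (a P : 'I_N -> R) (i : 'I_N) : R :=
  ln (1 + a i * P i) / ln 2.

Definition Jobj (a T P : 'I_N -> R) : R :=
  \sum_(i < N) (rate a P i - T i) ^+ 2.

Definition Pbar (a T : 'I_N -> R) (i : 'I_N) : R :=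
  (2 `^ T i - 1) / a i.

Definition feasible (Ptot : R) (P : 'I_N -> R) : Prop :=
  (forall i, 0 <= P i) /\ \sum_(i < N) P i <= Ptot.

Definition Jstar (a T : 'I_N -> R) (Ptot : R) : R :=
  inf [set Jobj a T P | P in feasible Ptot].

Definition optimal (a T : 'I_N -> R) (Ptot : R) (P : 'I_N -> R) : Prop :=
  feasible Ptot P /\ forall Q, feasible Ptot Q -> Jobj a T P <= Jobj a T Q.

Definition KKT_multiplier (a T : 'I_N -> R) (Ptot : R) (P : 'I_N -> R)
    (lam : R) : Prop :=
  0 <= lam /\
  exists mu : 'I_N -> R,
    (forall i, 0 <= mu i) /\
    (forall i, 2 * (rate a P i - T i) * (a i / ((1 + a i * P i) * ln 2))
               + lam - mu i = 0) /\
    (forall i, mu i * P i = 0) /\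
    lam * (\sum_(i < N) P i - Ptot) = 0.

End Defs.

(* Main.v *)
Require Import Defs.
From HB Require Import structures.
From mathcomp Require Import all_boot all_order all_algebra.
From mathcomp Require Import all_classical all_reals all_analysis.
From mathcomp Require Import ring lra.
Import Order.TTheory GRing.Theory Num.Theory.
Local Open Scope ring_scope.

Section Aux.
Variable R : realType.

Lemma ln2_gt0 : 0 < ln (2 : R).
Proof. by apply: ln_gt0; lra. Qed.

Lemma rate_mono (a x y : R) : 0 < a -> 0 <= x -> 0 <= y ->
  (ln (1 + a * x) / ln 2 < ln (1 + a * y) / ln 2) = (x < y).
Proof.
move=> ha hx hy.
have h2 := ln2_gt0.
have hx1 : 0 < 1 + a * x by have := mulr_ge0 (ltW ha) hx; lra.
have hy1 : 0 < 1 + a * y by have := mulr_ge0 (ltW ha) hy; lra.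
rewrite ltr_pM2r ?invr_gt0 // ltr_ln ?posrE //.
by rewrite ltrD2l ltr_pM2l.
Qed.

Lemma pbar_eq (a T : R) : 0 < a -> 1 + a * ((2 `^ T - 1) / a) = 2 `^ T.
Proof. move=> ha; field; by rewrite gt_eqF. Qed.

Lemma rate_bar (a T : R) : 0 < a -> ln (1 + a * ((2 `^ T - 1) / a)) / ln 2 = T.
Proof.
move=> ha; rewrite pbar_eq // ln_powR mulfK //.
by rewrite gt_eqF // ln2_gt0.
Qed.

Lemma pbar_ge0 (a T : R) : 0 < a -> 0 <= T -> 0 <= (2 `^ T - 1) / a.
Proof.
move=> ha hT; apply: divr_ge0; last exact: ltW.
rewrite subr_ge0 leNgt; apply/negP => hlt.
have hp : 0 < (2:R) `^ T by apply: powR_gt0; lra.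
have := ln_lt0 (x := (2:R) `^ T); rewrite hp hlt => /(_ isT).
rewrite ln_powR; have := ln2_gt0; have := mulr_ge0 hT (ltW ln2_gt0); lra.
Qed.

End Aux.
Arguments ln2_gt0 {R}.
Arguments rate_mono {R a x y}.
Arguments pbar_eq {R}.
Arguments rate_bar {R}.
Arguments pbar_ge0 {R}.

Theorem theorem2 (R : realType) (N : nat) (a T : 'I_N -> R) (Ptot : R) :
  (0 < N)%N ->
  (forall i, 0 < a i) ->
  (forall i, 0 <= T i) ->
  0 < Ptot ->
  (* (A) *)
  (\sum_(i < N) Pbar a T i <= Ptot ->
     optimal a T Ptot (Pbar a T) /\
     (forall P, optimal a T Ptot P -> P = Pbar a T) /\
     Jstar a T Ptot = 0 /\
     \sum_(i < N) Pbar a T i <= Ptot /\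
     (\sum_(i < N) Pbar a T i < Ptot -> \sum_(i < N) Pbar a T i < Ptot)) /\
  (* (B) *)
  (Ptot < \sum_(i < N) Pbar a T i ->
     (forall P, optimal a T Ptot P -> \sum_(i < N) P i = Ptot) /\
     0 < Jstar a T Ptot /\
     (forall P lam, optimal a T Ptot P -> KKT_multiplier a T Ptot P lam ->
        0 < lam)).
Proof.
move=> N0 ha hT hP.
have J0 : forall P, 0 <= Jobj a T P.
  by move=> P; apply: sumr_ge0 => i _; apply: sqr_ge0.
have Jbar : Jobj a T (Pbar a T) = 0.
  by apply: big1 => i _; rewrite /rate /Pbar rate_bar // subrr expr0n.
have pb0 : forall i, 0 <= Pbar a T i by move=> i; exact: pbar_ge0.
have rlt : forall (P : 'I_N -> R) i, 0 <= P i ->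
    (rate a P i < T i) = (P i < Pbar a T i).
  move=> P i hi; rewrite /rate /Pbar -(rate_mono (ha i) hi (pb0 i)).
  by rewrite rate_bar.
have rgt : forall (P : 'I_N -> R) i, 0 <= P i ->
    (T i < rate a P i) = (Pbar a T i < P i).
  move=> P i hi; rewrite /rate /Pbar -(rate_mono (ha i) (pb0 i) hi).
  by rewrite rate_bar.
split.
  move=> hsum.
  have fb : feasible Ptot (Pbar a T) by split.
  have optb : optimal a T Ptot (Pbar a T).
    by split=> // Q _; rewrite Jbar.
  split=> //; split.
    move=> P [[fP _] oP]; apply: funext => i.
    have JP : Jobj a T P = 0 by apply: le_anti; rewrite J0 andbT -Jbar oP.
    have := JP; rewrite /Jobj => /eqP; rewrite psumr_eq0; last first.
      by move=> j _; apply: sqr_ge0.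
    move=> /allP /(_ i (mem_index_enum _)) /implyP /(_ isT).
    rewrite sqrf_eq0 subr_eq0 => /eqP hr.
    apply: le_anti; rewrite !leNgt -rlt // -rgt // hr ltxx //.
  split=> //.
  apply: le_anti; apply/andP; split.
    rewrite -Jbar; apply: ge_inf; last by exists (Pbar a T).
    by exists 0 => y [Q _ <-].
  apply: lb_le_inf; first by exists 0, (Pbar a T).
  by move=> y [Q _ <-].
move=> hlt.
have exlt : forall P : 'I_N -> R, \sum_(i < N) P i <= Ptot ->
    exists i, P i < Pbar a T i.
  move=> P hs; case: (pselect (exists i, P i < Pbar a T i)) => // H.
  exfalso.
  have : \sum_(i < N) Pbar a T i <= \sum_(i < N) P i.
    apply: ler_sum => i _; rewrite leNgt; apply/negP => h; apply: H; by exists i.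
  lra.
split.
  move=> P [[fP fs] oP]; apply: le_anti; rewrite fs /=.
  rewrite leNgt; apply/negP => hs.
  have [i hi] := exlt P fs.
  pose d := Num.min (Pbar a T i - P i) (Ptot - \sum_(j < N) P j).
  have d0 : 0 < d by rewrite lt_min !subr_gt0 hi hs.
  have d1 : d <= Pbar a T i - P i by rewrite ge_min lexx.
  have d2 : d <= Ptot - \sum_(j < N) P j by rewrite ge_min lexx orbT.
  pose Q := fun j => P j + (j == i)%:R * d.
  have sQ : \sum_(j < N) Q j = \sum_(j < N) P j + d.
    rewrite /Q big_split /=; congr (_ + _).
    rewrite (bigD1 i) //= eqxx mul1r big1 ?addr0 // => j /negbTE ->.
    by rewrite mul0r.
  have fQ : feasible Ptot Q.
    split; last by rewrite sQ; lra.
    move=> j; rewrite /Q; apply: addr_ge0 => //; apply: mulr_ge0 => //.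
    exact: ltW.
  have := oP Q fQ; apply/negP; rewrite -ltNge /Jobj.
  rewrite (bigD1 i) //= [X in _ < X](bigD1 i) //=.
  have -> : \sum_(j < N | j != i) (rate a Q j - T j) ^+ 2 =
            \sum_(j < N | j != i) (rate a P j - T j) ^+ 2.
    apply: eq_bigr => j /negbTE hj; by rewrite /rate /Q hj mul0r addr0.
  rewrite ltrD2r.
  have hQi : Q i = P i + d by rewrite /Q eqxx mul1r.
  have hQ0 : 0 <= Q i by rewrite hQi; have := ltW d0; have := fP i; lra.
  have r1 : rate a P i < rate a Q i.
    rewrite /rate rate_mono //; rewrite hQi; lra.
  have r2 : rate a Q i <= T i.
    by rewrite leNgt rgt // -leNgt hQi; lra.
  nra.
split.
  pose D := \sum_(i < N) Pbar a T i - Ptot.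
  have D0 : 0 < D by rewrite /D subr_gt0.
  pose del := D / (N.+1)%:R.
  have del0 : 0 < del by rewrite /del divr_gt0.
  have delN : del *+ N < D.
    have hk : 0 <= (N%:R : R) by [].
    have : del * N%:R = D - del.
      rewrite /del -addn1 natrD; field.
      by rewrite gt_eqF //; have := hk; lra.
    by rewrite -mulr_natr; lra.
  pose g := fun i => if del <= Pbar a T i then
     (T i - rate a (fun j => Pbar a T j - del) i) ^+ 2 else 1.
  have g0 : forall i, 0 < g i.
    move=> i; rewrite /g; case: ifP => // hd.
    have hx : 0 <= Pbar a T i - del by rewrite subr_ge0.
    have : rate a (fun j => Pbar a T j - del) i < T i.
      by rewrite rlt //=; lra.
    move=> h; rewrite expr2; apply: mulr_gt0; lra.
  pose m := (\sum_(i < N) (g i)^-1)^-1.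
  have ginv0 : forall i, 0 < (g i)^-1 by move=> i; rewrite invr_gt0.
  have mg : forall i, m <= g i.
    move=> i; rewrite /m -[X in _ <= X]invrK lef_pV2 ?posrE //; last first.
      rewrite (bigD1 i) //=; apply: ltr_wpDr => //.
      by apply: sumr_ge0 => j _; apply: ltW.
    rewrite (bigD1 i) //= lerDl; apply: sumr_ge0 => j _; apply: ltW.
    by [].
  have m0 : 0 < m.
    rewrite /m invr_gt0 (bigD1 (Ordinal N0)) //=; apply: ltr_wpDr => //.
    by apply: sumr_ge0 => j _; apply: ltW.
  apply: (lt_le_trans m0); apply: lb_le_inf.
    exists (Jobj a T (fun=> 0)), (fun=> 0) => //.
    by split=> //; rewrite big1 //; exact: ltW.
  move=> y [P [fP fs] <-].
  have [i hi] : exists i, P i <= Pbar a T i - del.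
    case: (pselect (exists i, P i <= Pbar a T i - del)) => // H.
    exfalso.
    have : \sum_(i < N) (Pbar a T i - del) <= \sum_(i < N) P i.
      apply: ler_sum => i _; rewrite leNgt; apply/negP => h; apply: H.
      by exists i; apply: ltW.
    rewrite sumrB sumr_const card_ord -/D; rewrite /D in delN; lra.
  have hd : del <= Pbar a T i by have := fP i; lra.
  have hx : 0 <= Pbar a T i - del by rewrite subr_ge0.
  have r1 : rate a P i <= rate a (fun j => Pbar a T j - del) i.
    by rewrite leNgt /rate rate_mono //= -leNgt.
  have r2 : rate a (fun j => Pbar a T j - del) i < T i.
    by rewrite rlt //=; lra.
  apply: (le_trans (mg i)); rewrite /g hd.
  apply: (@le_trans _ _ ((rate a P i - T i) ^+ 2)); first nra.
  rewrite /Jobj (bigD1 i) //= lerDl; apply: sumr_ge0 => j _; exact: sqr_ge0.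
move=> P lam [[fP fs] _] [lam0 [mu [mu0 [eq1 _]]]].
have [i hi] := exlt P fs.
have ri : rate a P i < T i by rewrite rlt.
have c0 : 0 < a i / ((1 + a i * P i) * ln 2).
  apply: divr_gt0 => //; apply: mulr_gt0; last exact: ln2_gt0.
  by have := mulr_ge0 (ltW (ha i)) (fP i); lra.
have := eq1 i; have := mu0 i.
move=> hm he; rewrite lt_neqAle lam0 andbT eq_sym; apply/eqP => hl0.
rewrite hl0 addr0 in he.
set c := a i / _ in c0 he.
have hneg : 0 < 2 * (T i - rate a P i) * c.
  by apply: mulr_gt0 => //; apply: mulr_gt0; lra.
have e : 2 * (rate a P i - T i) * c = - (2 * (T i - rate a P i) * c) by ring.
lra.
Qed.
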